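(* Let $n\ge1$ and let $U\in\mathcal{C}_2^{(n)}$ be a Clifford unitary with Pauli periodicity $m\ge 1$. Then $(CU)^{-1}=C(U^{-1})$, where $U^{-1}\in\mathcal{C}_2^{(n)}$ again has Pauli periodicity $m$, and consequently $(CU)^{-1}\in\mathcal{C}_{m+2}^{(n+1)}\setminus\mathcal{C}_{m+1}^{(n+1)}$, i.e. $(CU)^{-1}$ lies in the same (strict) level of the Clifford hierarchy as $CU$.
   Context: The $n$-qubit Pauli group is $\mathcal{P}_n=\{\omega P_1\otimes\cdots\otimes P_n:\ \omega\in\{\pm1,\pm \mathrm{i}\},\ P_j\in\{I,X,Y,Z\}\}$. The Clifford hierarchy: $\mathcal{C}_1^{(n)}:=\mathcal{P}_n$, $\mathcal{C}_{k+1}^{(n)}:=\{U\in U(2^n):\ UPU^\dagger\in\mathcal{C}_k^{(n)}\ \forall P\in\mathcal{P}_n\}$; $\mathcal{C}_2^{(n)}$ is the Clifford group. $CU:=\ket{0}\!\bra{0}\otimes I_{2^n}+\ket{1}\!\bra{1}\otimes U$ (first qubit is the control). The Pauli periodicity of $U$ is $\min\{t\ge 0:\ U^{2^t}\in\mathcal{P}_n\}$ (exact membership in $\mathcal{P}_n$). *)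

(* Defs.v *)
From mathcomp Require Import all_boot all_order all_algebra.
Set Implicit Arguments. Unset Strict Implicit. Unset Printing Implicit Defensive.
Import GRing.Theory Num.Theory.
Local Open Scope ring_scope.

(* Complex numbers: an arbitrary numClosedFieldType C (e.g. algC, or complex R). *)
Section Qubits.
Variable C : numClosedFieldType.

Lemma two_pow_succ (n : nat) : (2 ^ n + 2 ^ n = 2 ^ n.+1)%N.
Proof. by rewrite expnS mul2n addnn. Qed.

(* Kronecker product A (x) B of a one-qubit matrix A (first / outer factor)
   with an n-qubit matrix B. *)
Definition kron2 (n : nat) (A : 'M[C]_2) (B : 'M[C]_(2 ^ n)) : 'M[C]_(2 ^ n.+1) :=
  castmx (two_pow_succ n, two_pow_succ n)
    (block_mx (A 0 0 *: B) (A 0 1 *: B) (A 1 0 *: B) (A 1 1 *: B)).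

Definition pauliI : 'M[C]_2 := 1%:M.
Definition pauliX : 'M[C]_2 := \matrix_(i < 2, j < 2) (if i != j then 1 else 0).
Definition pauliY : 'M[C]_2 :=
  \matrix_(i < 2, j < 2) (if i == j then 0 else if i == 0 then - 'i else 'i).
Definition pauliZ : 'M[C]_2 :=
  \matrix_(i < 2, j < 2) (if i == j then (if i == 0 then 1 else -1) else 0).

Definition pauli1 (a : 'I_4) : 'M[C]_2 :=
  match val a with 0 => pauliI | 1 => pauliX | 2 => pauliY | _ => pauliZ end.

Lemma two_pow0 : (1 = 2 ^ 0)%N. Proof. by []. Qed.

Fixpoint pauli_string (n : nat) (f : nat -> 'I_4) : 'M[C]_(2 ^ n) :=
  match n with
  | 0 => castmx (two_pow0, two_pow0) 1%:M
  | n'.+1 => kron2 (pauli1 (f 0%N)) (pauli_string n' (fun k => f k.+1))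
  end.

Definition is_pauli (n : nat) (M : 'M[C]_(2 ^ n)) : Prop :=
  exists (w : C) (f : nat -> 'I_4),
    (w = 1 \/ w = -1 \/ w = 'i \/ w = - 'i) /\ M = w *: pauli_string n f.

Definition adjoint (m : nat) (M : 'M[C]_m) : 'M[C]_m := (map_mx Num.conj M)^T.

Definition unitary (m : nat) (M : 'M[C]_m) : Prop :=
  M *m adjoint M = 1%:M /\ adjoint M *m M = 1%:M.

(* hier k n = C_{k+1}^{(n)} *)
Fixpoint hier (k n : nat) (U : 'M[C]_(2 ^ n)) : Prop :=
  match k with
  | 0 => is_pauli U
  | k'.+1 => unitary U /\
      forall P : 'M[C]_(2 ^ n), is_pauli P -> hier k' (U *m P *m adjoint U)
  end.

(* Clifford hierarchy level C_k^{(n)}, for k >= 1 (level 0 is undefined: empty) *)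
Definition clifford_level (k n : nat) (U : 'M[C]_(2 ^ n)) : Prop :=
  match k with 0 => False | k'.+1 => hier k' U end.

Definition mxpow (m : nat) (U : 'M[C]_m) (k : nat) : 'M[C]_m := iter k (mulmx U) 1%:M.

Definition pauli_periodicity (n : nat) (U : 'M[C]_(2 ^ n)) (m : nat) : Prop :=
  is_pauli (mxpow U (2 ^ m)) /\ forall t, (t < m)%N -> ~ is_pauli (mxpow U (2 ^ t)).

Definition proj0 : 'M[C]_2 := \matrix_(i < 2, j < 2) (if (i == 0) && (j == 0) then 1 else 0).
Definition proj1 : 'M[C]_2 := \matrix_(i < 2, j < 2) (if (i == 1) && (j == 1) then 1 else 0).

Definition ctrl (n : nat) (U : 'M[C]_(2 ^ n)) : 'M[C]_(2 ^ n.+1) :=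
  kron2 proj0 1%:M + kron2 proj1 U.

End Qubits.

(* Main.v *)
Require Import Defs.
From mathcomp Require Import all_boot all_order all_algebra.
Set Implicit Arguments. Unset Strict Implicit. Unset Printing Implicit Defensive.
Import GRing.Theory Num.Theory.
Local Open Scope ring_scope.

Section S.
Variable C : numClosedFieldType.

Lemma castmx_mul k l (e : k = l) (A B : 'M[C]_k) :
  castmx (e,e) A *m castmx (e,e) B = castmx (e,e) (A *m B).
Proof. by case: l / e; rewrite !castmx_id. Qed.
Lemma castmx_add k l (e : k = l) (A B : 'M[C]_k) :
  castmx (e,e) A + castmx (e,e) B = castmx (e,e) (A + B).
Proof. by case: l / e; rewrite !castmx_id. Qed.
Lemma castmx_scale k l (e : k = l) c (A : 'M[C]_k) :
  c *: castmx (e,e) A = castmx (e,e) (c *: A).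
Proof. by case: l / e; rewrite !castmx_id. Qed.
Lemma castmx_adj k l (e : k = l) (A : 'M[C]_k) :
  adjoint (castmx (e,e) A) = castmx (e,e) (adjoint A).
Proof. by case: l / e; rewrite !castmx_id. Qed.
Lemma castmx_one k l (e : k = l) :
  castmx (e,e) (1%:M : 'M[C]_k) = 1%:M.
Proof. by case: l / e; rewrite !castmx_id. Qed.
Lemma castmx_inj k l (e : k = l) (A B : 'M[C]_k) :
  castmx (e,e) A = castmx (e,e) B -> A = B.
Proof. by case: l / e; rewrite !castmx_id. Qed.

Definition blk n (A B D E : 'M[C]_(2^n)) : 'M[C]_(2^n.+1) :=
  castmx (two_pow_succ n, two_pow_succ n) (block_mx A B D E).

Lemma blk_mul n (A B D E A' B' D' E' : 'M[C]_(2^n)) :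
  blk A B D E *m blk A' B' D' E' =
  blk (A *m A' + B *m D') (A *m B' + B *m E') (D *m A' + E *m D') (D *m B' + E *m E').
Proof. by rewrite /blk castmx_mul mulmx_block. Qed.

Lemma blk_add n (A B D E A' B' D' E' : 'M[C]_(2^n)) :
  blk A B D E + blk A' B' D' E' = blk (A + A') (B + B') (D + D') (E + E').
Proof. by rewrite /blk castmx_add add_block_mx. Qed.

Lemma blk_scale n c (A B D E : 'M[C]_(2^n)) :
  c *: blk A B D E = blk (c *: A) (c *: B) (c *: D) (c *: E).
Proof. by rewrite /blk castmx_scale scale_block_mx. Qed.

Lemma blk1 n : (1%:M : 'M[C]_(2^n.+1)) = blk 1%:M 0 0 1%:M.
Proof. by rewrite /blk -scalar_mx_block castmx_one. Qed.

Lemma adjoint_block m1 m2 (A : 'M[C]_(m1,m1)) (B : 'M[C]_(m1,m2)) (D : 'M[C]_(m2,m1)) (E : 'M[C]_(m2,m2)) :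
  (map_mx Num.conj (block_mx A B D E))^T =
  block_mx (map_mx Num.conj A)^T (map_mx Num.conj D)^T (map_mx Num.conj B)^T (map_mx Num.conj E)^T.
Proof. by rewrite map_block_mx tr_block_mx. Qed.

Lemma blk_adj n (A B D E : 'M[C]_(2^n)) :
  adjoint (blk A B D E) = blk (adjoint A) (adjoint D) (adjoint B) (adjoint E).
Proof. by rewrite /blk castmx_adj /adjoint adjoint_block. Qed.

Lemma blk_inj n (A B D E A' B' D' E' : 'M[C]_(2^n)) :
  blk A B D E = blk A' B' D' E' -> [/\ A = A', B = B', D = D' & E = E'].
Proof. by move/castmx_inj/eq_block_mx. Qed.

Lemma kron2E n (a : 'M[C]_2) (B : 'M[C]_(2^n)) :
  kron2 a B = blk (a 0 0 *: B) (a 0 1 *: B) (a 1 0 *: B) (a 1 1 *: B).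
Proof. by []. Qed.

Lemma ctrlE n (U : 'M[C]_(2^n)) : ctrl U = blk 1%:M 0 0 U.
Proof.
rewrite /ctrl !kron2E blk_add !mxE /=.
by rewrite !scale1r !scale0r !addr0 !add0r.
Qed.

End S.


Section S.
Variable C : numClosedFieldType.

Definition isph (w : C) := w = 1 \/ w = -1 \/ w = 'i \/ w = - 'i.

Lemma ii : 'i * 'i = -1 :> C. Proof. by rewrite -expr2 sqrCi. Qed.

Ltac phs := rewrite ?mul1r ?mulr1 ?mulN1r ?mulrN1 ?mulNr ?mulrN ?opprK ?ii ?opprK.

Lemma isph_mul a b : isph a -> isph b -> isph (a * b).
Proof.
rewrite /isph.
by case=> [->|[->|[->|->]]] [->|[->|[->|->]]]; phs; tauto.
Qed.

Lemma isph1 : isph 1. Proof. by left. Qed.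
Lemma isphN1 : isph (-1). Proof. by right; left. Qed.

Lemma cN (x : C) : (- x)^* = - x^*. Proof. by rewrite rmorphN. Qed.

Lemma isph_conj a : isph a -> isph a^* /\ a * a^* = 1.
Proof.
rewrite /isph.
case=> [->|[->|[->|->]]]; rewrite ?rmorph1 ?cN ?rmorph1 ?conjCi; phs; tauto.

Qed.

Lemma isph_sq a : isph a -> a * a = 1 \/ a * a = -1.
Proof. rewrite /isph. by case=> [->|[->|[->|->]]]; phs; tauto. Qed.

Lemma isph_neq0 a : isph a -> a != 0.
Proof.
rewrite /isph. case=> [->|[->|[->|->]]]; rewrite ?oppr_eq0 ?oner_eq0 //.
by apply/eqP => h; move: ii; rewrite h mul0r => /eqP; rewrite eq_sym oppr_eq0 oner_eq0.
by apply/eqP => h; move: ii; rewrite h mul0r => /eqP; rewrite eq_sym oppr_eq0 oner_eq0.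
Qed.

End S.


Section S.
Variable C : numClosedFieldType.
Ltac phs := rewrite ?mul1r ?mulr1 ?mulN1r ?mulrN1 ?mulNr ?mulrN ?opprK ?ii ?opprK.

Ltac a4 a := case: a => [[|[|[|[|//]]]] ?].
Ltac m2 := apply/matrixP; case=> [[|[|//]] ?]; case=> [[|[|//]] ?];
  rewrite !mxE ?big_ord_recl ?big_ord0 /= ?mxE /=.

Lemma p1_adj a : adjoint (pauli1 C a) = pauli1 C a.
Proof.
a4 a; rewrite /adjoint /=; m2; rewrite ?(rmorph0, rmorph1, cN, conjCi, opprK) //.
Qed.
End S.
Section S2.
Variable C : numClosedFieldType.
Ltac a4 a := case: a => [[|[|[|[|//]]]] ?].
Ltac m2 := apply/matrixP; case=> [[|[|//]] ?]; case=> [[|[|//]] ?];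
  rewrite !mxE ?big_ord_recl ?big_ord0 /= ?mxE /=.
Ltac sp := rewrite ?(mul0r, mulr0, add0r, addr0, mul1r, mulr1, mulN1r, mulrN1, mulNr, mulrN, opprK, ii, oppr0).

Lemma p1_sq a : pauli1 C a *m pauli1 C a = 1%:M.
Proof. a4 a; m2; sp; done. Qed.

Ltac wit := (exists 1 + exists (-1) + exists 'i + exists (-'i));
  (exists (@Ordinal 4 0 isT) + exists (@Ordinal 4 1 isT) + exists (@Ordinal 4 2 isT) + exists (@Ordinal 4 3 isT));
  split; [rewrite /isph; tauto | m2; sp; done].

Lemma p1_mul a b : exists c d, isph c /\ pauli1 C a *m pauli1 C b = c *: pauli1 C d.
Proof.
a4 a; a4 b.
- by exists (1), (@Ordinal 4 0 isT); split; [rewrite /isph; tauto | m2; sp].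
- by exists (1), (@Ordinal 4 1 isT); split; [rewrite /isph; tauto | m2; sp].
- by exists (1), (@Ordinal 4 2 isT); split; [rewrite /isph; tauto | m2; sp].
- by exists (1), (@Ordinal 4 3 isT); split; [rewrite /isph; tauto | m2; sp].
- by exists (1), (@Ordinal 4 1 isT); split; [rewrite /isph; tauto | m2; sp].
- by exists (1), (@Ordinal 4 0 isT); split; [rewrite /isph; tauto | m2; sp].
- by exists ('i), (@Ordinal 4 3 isT); split; [rewrite /isph; tauto | m2; sp].
- by exists (-'i), (@Ordinal 4 2 isT); split; [rewrite /isph; tauto | m2; sp].
- by exists (1), (@Ordinal 4 2 isT); split; [rewrite /isph; tauto | m2; sp].
- by exists (-'i), (@Ordinal 4 3 isT); split; [rewrite /isph; tauto | m2; sp].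
- by exists (1), (@Ordinal 4 0 isT); split; [rewrite /isph; tauto | m2; sp].
- by exists ('i), (@Ordinal 4 1 isT); split; [rewrite /isph; tauto | m2; sp].
- by exists (1), (@Ordinal 4 3 isT); split; [rewrite /isph; tauto | m2; sp].
- by exists ('i), (@Ordinal 4 2 isT); split; [rewrite /isph; tauto | m2; sp].
- by exists (-'i), (@Ordinal 4 1 isT); split; [rewrite /isph; tauto | m2; sp].
- by exists (1), (@Ordinal 4 0 isT); split; [rewrite /isph; tauto | m2; sp].
Qed.
End S2.


Section S.
Variable C : numClosedFieldType.

Lemma adj_mul k (A B : 'M[C]_k) : adjoint (A *m B) = adjoint B *m adjoint A.
Proof. by rewrite /adjoint map_mxM trmx_mul. Qed.
Lemma adj_scale k c (A : 'M[C]_k) : adjoint (c *: A) = c^* *: adjoint A.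
Proof. by rewrite /adjoint map_mxZ linearZ. Qed.
Lemma adj_one k : adjoint (1%:M : 'M[C]_k) = 1%:M.
Proof. by rewrite /adjoint map_mx1 trmx1. Qed.
Lemma adj_zero k : adjoint (0 : 'M[C]_k) = 0.
Proof. by rewrite /adjoint map_mx0 trmx0. Qed.
Lemma adjK k (A : 'M[C]_k) : adjoint (adjoint A) = A.
Proof.
by apply/matrixP => i j; rewrite /adjoint !mxE conjCK.
Qed.
End S.
Section S2.
Variable C : numClosedFieldType.

Lemma sum2 (F : 'I_2 -> C) : \sum_i F i = F 0 + F 1.
Proof. by rewrite big_ord_recl big_ord1; congr (F _ + F _); apply: val_inj. Qed.

Lemma kron2_mul n (a a' : 'M[C]_2) (B B' : 'M[C]_(2^n)) :
  kron2 a B *m kron2 a' B' = kron2 (a *m a') (B *m B').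
Proof.
rewrite !kron2E blk_mul !mxE !sum2.
rewrite -!scalemxAl -!scalemxAr !scalerA !scalerDl.
done.
Qed.

Lemma kron2_adj n (a : 'M[C]_2) (B : 'M[C]_(2^n)) :
  adjoint (kron2 a B) = kron2 (adjoint a) (adjoint B).
Proof. by rewrite !kron2E blk_adj !adj_scale /adjoint !mxE. Qed.

Lemma kron2_scalel n c (a : 'M[C]_2) (B : 'M[C]_(2^n)) :
  kron2 (c *: a) B = c *: kron2 a B.
Proof. by rewrite !kron2E blk_scale !mxE !scalerA. Qed.

Lemma kron2_scaler n c (a : 'M[C]_2) (B : 'M[C]_(2^n)) :
  kron2 a (c *: B) = c *: kron2 a B.
Proof. by rewrite !kron2E blk_scale !scalerA mulrC [c * a 0 1]mulrC [c * a 1 0]mulrC [c * a 1 1]mulrC. Qed.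

Lemma kron2_one n : kron2 1%:M (1%:M : 'M[C]_(2^n)) = 1%:M.
Proof. by rewrite kron2E blk1 !mxE /= !scale1r !scale0r. Qed.
End S2.


Section S.
Variable C : numClosedFieldType.

Definition string n (S : 'M[C]_(2^n)) := exists f, S = pauli_string C n f.

Lemma string0 (S : 'M[C]_(2^0)) : string S -> S = 1%:M.
Proof. by case=> f ->; rewrite /= castmx_one. Qed.

Lemma stringS n (S : 'M[C]_(2^n.+1)) :
  string S <-> exists a T, string T /\ S = kron2 (pauli1 C a) T.
Proof.
split.
  case=> f ->; exists (f 0%N), (pauli_string C n (fun k => f k.+1)); split => //.
  by exists (fun k => f k.+1).
case=> a [T [[g ->] ->]].
by exists (fun k => if k is k'.+1 then g k' else a).
Qed.

Lemma string_kron n a (T : 'M[C]_(2^n)) : string T -> string (kron2 (pauli1 C a) T).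
Proof. by move=> hT; apply/stringS; exists a, T. Qed.

Lemma str_adj n (S : 'M[C]_(2^n)) : string S -> adjoint S = S.
Proof.
elim: n S => [|n IH] S.
  by move/string0 => ->; rewrite adj_one.
by case/stringS => a [T [hT ->]]; rewrite kron2_adj p1_adj IH.
Qed.

Lemma str_sq n (S : 'M[C]_(2^n)) : string S -> S *m S = 1%:M.
Proof.
elim: n S => [|n IH] S.
  by move/string0 => ->; rewrite mulmx1.
by case/stringS => a [T [hT ->]]; rewrite kron2_mul p1_sq IH // kron2_one.
Qed.

Lemma str_one n : string (1%:M : 'M[C]_(2^n)).
Proof.
elim: n => [|n IH]; first by exists (fun _ => ord0); rewrite /= castmx_one.
rewrite -kron2_one; have -> : (1%:M : 'M[C]_2) = pauli1 C ord0 by [].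
exact: string_kron.
Qed.

Lemma str_mul n (S T : 'M[C]_(2^n)) : string S -> string T ->
  exists c R, [/\ isph c, string R & S *m T = c *: R].
Proof.
elim: n S T => [|n IH] S T.
  move=> /string0 -> /string0 ->; exists 1, 1%:M; split => //.
  - exact: isph1.
  - exact: str_one.
  - by rewrite mulmx1 scale1r.
case/stringS => a [S' [hS ->]]; case/stringS => b [T' [hT ->]].
have [c [d [hc e1]]] := p1_mul C a b.
have [c' [R [hc' hR e2]]] := IH _ _ hS hT.
exists (c * c'), (kron2 (pauli1 C d) R); split.
- exact: isph_mul.
- exact: string_kron.
by rewrite kron2_mul e1 e2 kron2_scalel kron2_scaler scalerA.
Qed.
End S.


Section S.
Variable C : numClosedFieldType.

Lemma scale_mul k a b (A B : 'M[C]_k) : (a *: A) *m (b *: B) = (a * b) *: (A *m B).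
Proof. by rewrite -scalemxAl -scalemxAr scalerA. Qed.

Lemma pauliE n (M : 'M[C]_(2^n)) :
  is_pauli M <-> exists w S, [/\ isph w, string S & M = w *: S].
Proof.
split; first by case=> w [f [hw ->]]; exists w, (pauli_string C n f); split => //; exists f.
by case=> w [S [hw [f ->] ->]]; exists w, f.
Qed.

Lemma pauli_mul n (P Q : 'M[C]_(2^n)) : is_pauli P -> is_pauli Q -> is_pauli (P *m Q).
Proof.
move=> /pauliE [w [S [hw hS ->]]] /pauliE [v [T [hv hT ->]]].
have [c [R [hc hR e]]] := str_mul hS hT.
apply/pauliE; exists (w * v * c), R; split => //.
- by apply: isph_mul => //; apply: isph_mul.
by rewrite scale_mul e scalerA.
Qed.

Lemma pauli_scale n c (P : 'M[C]_(2^n)) : isph c -> is_pauli P -> is_pauli (c *: P).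
Proof.
move=> hc /pauliE [w [S [hw hS ->]]]; apply/pauliE; exists (c * w), S; split => //.
- exact: isph_mul.
by rewrite scalerA.
Qed.

Lemma pauli_one n : is_pauli (1%:M : 'M[C]_(2^n)).
Proof. apply/pauliE; exists 1, 1%:M; split; [exact: isph1 | exact: str_one | by rewrite scale1r]. Qed.

Lemma pauli_adj n (P : 'M[C]_(2^n)) : is_pauli P -> is_pauli (adjoint P).
Proof.
move=> /pauliE [w [S [hw hS ->]]]; apply/pauliE; exists w^*, S; split => //.
- by case: (isph_conj hw).
by rewrite adj_scale str_adj.
Qed.

Lemma pauli_unitary n (P : 'M[C]_(2^n)) : is_pauli P -> unitary P.
Proof.
move=> /pauliE [w [S [hw hS ->]]]; rewrite /unitary adj_scale str_adj //.
have [_ e] := isph_conj hw.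
by rewrite !scale_mul str_sq // [w^* * w]mulrC e scale1r.
Qed.

Definition issg (s : C) := s = 1 \/ s = -1.

Lemma issg_isph s : issg s -> isph s.
Proof. by case=> ->; rewrite /isph; tauto. Qed.

Lemma pauli_comm n (P Q : 'M[C]_(2^n)) : is_pauli P -> is_pauli Q ->
  exists s, issg s /\ P *m Q *m adjoint P = s *: Q.
Proof.
move=> /pauliE [w [S [hw hS ->]]] /pauliE [v [T [hv hT ->]]].
have [c [R [hc hR e]]] := str_mul hS hT.
have e2 : S *m T *m S = (c * c) *: T.
  rewrite -[S *m T *m S]mulmx1 -(str_sq hT) !mulmxA -[S *m T *m S *m T]mulmxA e.
  by rewrite scale_mul str_sq // -scalemxAl mul1mx.
exists (c * c); split; first exact: isph_sq.
rewrite adj_scale str_adj // !scale_mul e2.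
have [_ ew] := isph_conj hw.
by rewrite !scalerA [w * v]mulrC -[v * w * _]mulrA ew mulr1 mulrC.
Qed.

Lemma pauli_sq n (P : 'M[C]_(2^n)) : is_pauli P -> exists s, issg s /\ P *m P = s *: 1%:M.
Proof.
move=> /pauliE [w [S [hw hS ->]]]; exists (w * w); split; first exact: isph_sq.
by rewrite scale_mul str_sq.
Qed.

Lemma pauli_kron n a (P : 'M[C]_(2^n)) : is_pauli P -> is_pauli (kron2 (pauli1 C a) P).
Proof.
move=> /pauliE [w [S [hw hS ->]]]; apply/pauliE; exists w, (kron2 (pauli1 C a) S); split => //.
- exact: string_kron.
by rewrite kron2_scaler.
Qed.

Lemma pauli_dec n (M : 'M[C]_(2^n.+1)) : is_pauli M ->
  exists w a S, [/\ isph w, string S & M = w *: kron2 (pauli1 C a) S].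
Proof.
move=> /pauliE [w [S' [hw /stringS [a [S [hS ->]]] ->]]].
by exists w, a, S.
Qed.
End S.


Section S.
Variable C : numClosedFieldType.

Lemma conj_mul k (A B Q : 'M[C]_k) :
  (A *m B) *m Q *m adjoint (A *m B) = A *m (B *m Q *m adjoint B) *m adjoint A.
Proof. by rewrite adj_mul !mulmxA. Qed.

Lemma unitary_mul k (A B : 'M[C]_k) : unitary A -> unitary B -> unitary (A *m B).
Proof.
move=> [a1 a2] [b1 b2]; split; rewrite adj_mul.
  by rewrite mulmxA -(mulmxA A) b1 mulmx1 a1.
by rewrite mulmxA -(mulmxA _ _ A) a2 mulmx1 b2.
Qed.

Lemma unitary_adj k (A : 'M[C]_k) : unitary A -> unitary (adjoint A).
Proof. by move=> [a1 a2]; split; rewrite adjK. Qed.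

Lemma hier_unitary k n (U : 'M[C]_(2^n)) : hier k U -> unitary U.
Proof. by case: k => [|k] /=; [exact: pauli_unitary | case]. Qed.

Lemma hier_mono k n (U : 'M[C]_(2^n)) : hier k U -> hier k.+1 U.
Proof.
elim: k U => [|k IH] U /=.
  move=> hU; split; first exact: pauli_unitary.
  by move=> P hP; apply: pauli_mul; [apply: pauli_mul|apply: pauli_adj].
by case=> hu h; split => // P hP; apply: IH; apply: h.
Qed.

Lemma hier_conjP k n (P Y : 'M[C]_(2^n)) : is_pauli P -> hier k Y -> hier k (P *m Y *m adjoint P).
Proof.
elim: k Y => [|k IH] Y hP /=.
  by move=> hY; apply: pauli_mul; [apply: pauli_mul|apply: pauli_adj].
case=> hu h; split.
  apply: unitary_mul; first apply: unitary_mul => //; try exact: pauli_unitary.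
  by apply: unitary_adj; apply: pauli_unitary.
move=> Q hQ.
have -> : P *m Y *m adjoint P *m Q *m adjoint (P *m Y *m adjoint P) =
   P *m (Y *m (adjoint P *m Q *m P) *m adjoint Y) *m adjoint P.
  by rewrite !adj_mul adjK !mulmxA.
apply: IH => //; apply: h.
by apply: pauli_mul; [apply: pauli_mul => //; apply: pauli_adj|].
Qed.

Lemma hier_mull k n (P A : 'M[C]_(2^n)) : is_pauli P -> hier k A -> hier k (P *m A).
Proof.
case: k => [|k] hP /=; first exact: pauli_mul.
case=> hu h; split; first by apply: unitary_mul => //; apply: pauli_unitary.
move=> Q hQ; rewrite conj_mul; apply: hier_conjP => //; exact: h.
Qed.

Lemma hier_mulr k n (A B : 'M[C]_(2^n)) : hier k.+1 A -> hier 1 B -> hier k.+1 (A *m B).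
Proof.
case=> hu h [hb hB]; split; first exact: unitary_mul.
by move=> Q hQ; rewrite conj_mul; apply: h; apply: hB.
Qed.

Lemma pauli_cliff n (P : 'M[C]_(2^n)) : is_pauli P -> hier 1 P.
Proof. exact: (@hier_mono 0). Qed.

Lemma hier_le k l n (U : 'M[C]_(2^n)) : (k <= l)%N -> hier k U -> hier l U.
Proof.
move=> kl; rewrite -(subnKC kl); elim: (l - k)%N => [|d IH]; first by rewrite addn0.
by rewrite addnS => h; apply: hier_mono; apply: IH.
Qed.
End S.


Section S.
Variable C : numClosedFieldType.

Lemma mxpowS k (U : 'M[C]_k) j : mxpow U j.+1 = U *m mxpow U j.
Proof. by []. Qed.

Lemma mxpowD k (U : 'M[C]_k) a b : mxpow U (a + b) = mxpow U a *m mxpow U b.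
Proof.
elim: a => [|a IH]; first by rewrite add0n /= mul1mx.
by rewrite addSn !mxpowS IH mulmxA.
Qed.

Lemma mxpowSr k (U : 'M[C]_k) j : mxpow U j.+1 = mxpow U j *m U.
Proof. by rewrite -addn1 mxpowD /= mulmx1. Qed.

Lemma mxpow_sq k (U : 'M[C]_k) j : mxpow (U *m U) j = mxpow U (j + j).
Proof.
elim: j => [|j IH] //.
by rewrite mxpowS IH addSn addnS !mxpowS mulmxA.
Qed.

Lemma mxpow_sq2 k (U : 'M[C]_k) j : mxpow (U *m U) (2 ^ j) = mxpow U (2 ^ j.+1).
Proof. by rewrite mxpow_sq two_pow_succ. Qed.

Lemma mxpow_adj k (U : 'M[C]_k) j : adjoint (mxpow U j) = mxpow (adjoint U) j.
Proof.
elim: j => [|j IH]; first by rewrite /= adj_one.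
by rewrite mxpowS adj_mul IH mxpowSr.
Qed.

Lemma mxpow1 k (U : 'M[C]_k) : mxpow U 1 = U.
Proof. by rewrite /= mulmx1. Qed.

Lemma cliff_pow n (U : 'M[C]_(2^n)) j : hier 1 U -> hier 1 (mxpow U j).
Proof.
move=> hU; elim: j => [|j IH]; first by apply: pauli_cliff; apply: pauli_one.
by rewrite mxpowSr; apply: hier_mulr.
Qed.

Lemma cliff_conj n (U P : 'M[C]_(2^n)) : hier 1 U -> is_pauli P -> is_pauli (U *m P *m adjoint U).
Proof. by case=> _ h /h. Qed.

Lemma cliff_inv n (V P0 : 'M[C]_(2^n)) N : hier 1 V -> mxpow V N.+1 = P0 -> is_pauli P0 ->
  hier 1 (adjoint V).
Proof.
move=> hV eP hP.
have [v1 v2] := hier_unitary hV.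
have [p1 p2] := pauli_unitary hP.
have [x1 x2] := hier_unitary (cliff_pow N hV).
have -> : adjoint V = adjoint P0 *m mxpow V N.
  by rewrite -eP mxpowSr adj_mul -mulmxA x2 mulmx1.
apply: hier_mull; first exact: pauli_adj.
exact: cliff_pow.
Qed.

Lemma pow_WV2 n (W V : 'M[C]_(2^n)) j : is_pauli W -> hier 1 V ->
  exists R, is_pauli R /\ mxpow (W *m (V *m V)) (2 ^ j) = R *m mxpow V (2 ^ j.+1).
Proof.
move=> hW hV; elim: j => [|j [R [hR e]]].
  by exists W; split => //; rewrite expn0 !mxpow1 /= mulmx1.
pose N := (2 ^ j.+1)%N; pose X := mxpow V N.
have hX : hier 1 X := cliff_pow N hV.
have [x1 x2] := hier_unitary hX.
exists (R *m (X *m R *m adjoint X)); split.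
  by apply: pauli_mul => //; apply: cliff_conj.
have E1 : (2 ^ j.+1 = 2 ^ j + 2 ^ j)%N by rewrite two_pow_succ.
have E2 : (2 ^ j.+2 = N + N)%N by rewrite two_pow_succ.
rewrite E1 E2 mxpowD e mxpowD -/N -/X.
by rewrite !mulmxA -(mulmxA _ (adjoint X) X) x2 mulmx1.
Qed.

End S.


Section S.
Variable C : numClosedFieldType.

Ltac ms := rewrite ?(mul0mx, mulmx0, mul1mx, mulmx1, add0r, addr0, scale0r, scale1r, adj_one, adj_zero).

Lemma ctrl_adj n (V : 'M[C]_(2^n)) : adjoint (ctrl V) = ctrl (adjoint V).
Proof. by rewrite !ctrlE blk_adj; ms. Qed.

Lemma ctrl_mul n (A B : 'M[C]_(2^n)) : ctrl A *m ctrl B = ctrl (A *m B).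
Proof. by rewrite !ctrlE blk_mul; ms. Qed.

Lemma ctrl_one n : ctrl (1%:M : 'M[C]_(2^n)) = 1%:M.
Proof. by rewrite ctrlE blk1. Qed.

Lemma ctrl_unitary n (V : 'M[C]_(2^n)) : unitary V -> unitary (ctrl V).
Proof. by case=> v1 v2; split; rewrite ctrl_adj ctrl_mul ?v1 ?v2 ctrl_one. Qed.

Lemma conj_ctrl n (V Q : 'M[C]_(2^n)) (a : 'M[C]_2) :
  ctrl V *m kron2 a Q *m adjoint (ctrl V) =
  blk (a 0 0 *: Q) (a 0 1 *: (Q *m adjoint V)) (a 1 0 *: (V *m Q)) (a 1 1 *: (V *m Q *m adjoint V)).
Proof.
rewrite ctrl_adj !ctrlE kron2E !blk_mul; ms.
by rewrite -!scalemxAl -!scalemxAr -?scalemxAl.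
Qed.

Definition x1 : 'I_4 := @Ordinal 4 1 isT.
Definition z1 : 'I_4 := @Ordinal 4 3 isT.

Lemma kronX n (A : 'M[C]_(2^n)) : kron2 (pauli1 C x1) A = blk 0 A A 0.
Proof. by rewrite kron2E !mxE /=; ms. Qed.

Lemma kronZ1 n : kron2 (pauli1 C z1) (1%:M : 'M[C]_(2^n)) = ctrl (- 1%:M).
Proof. by rewrite kron2E ctrlE !mxE /=; ms; rewrite scaleN1r. Qed.

End S.


Section S.
Variable C : numClosedFieldType.

Ltac ms := rewrite ?(mul0mx, mulmx0, mul1mx, mulmx1, add0r, addr0, scale0r, scale1r, adj_one, adj_zero, scaleN1r).

Lemma conj_dec n (V : 'M[C]_(2^n)) (P : 'M[C]_(2^n.+1)) : unitary V -> is_pauli P ->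
 exists P1 Q, [/\ is_pauli P1, string Q &
   (ctrl V *m P *m adjoint (ctrl V) = P1 *m ctrl (Q *m V *m Q *m adjoint V) \/
    ctrl V *m P *m adjoint (ctrl V) =
      P1 *m ctrl (Q *m V *m Q *m adjoint V *m (V *m V)) *m kron2 (pauli1 C x1) (adjoint V))].
Proof.
move=> [v1 v2] /pauli_dec [w [a [Q [hw hQ ->]]]].
have hK b : is_pauli (w *: kron2 (pauli1 C b) Q).
  apply: pauli_scale => //; apply: pauli_kron; apply/pauliE; exists 1, Q; split => //.
  - exact: isph1.
  - by rewrite scale1r.
have QQ := str_sq hQ.
have e1 : Q *m (Q *m V *m Q *m adjoint V) = V *m Q *m adjoint V.
  by rewrite !mulmxA QQ mul1mx.
have e2 : Q *m (Q *m V *m Q *m adjoint V *m (V *m V)) *m adjoint V = V *m Q.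
  by rewrite !mulmxA QQ mul1mx -(mulmxA _ (adjoint V) V) v2 mulmx1 -(mulmxA _ V (adjoint V)) v1 mulmx1.
rewrite -scalemxAr -scalemxAl conj_ctrl.
case: a => [[|[|[|[|//]]]] ?].
- exists (w *: kron2 (pauli1 C (@Ordinal 4 0 isT)) Q), Q; split => //; left.
  rewrite -scalemxAl kron2E ctrlE blk_mul !mxE /=; ms.
  by rewrite e1.
- exists (w *: (kron2 (pauli1 C (@Ordinal 4 1 isT)) Q *m kron2 (pauli1 C x1) 1%:M)), Q; split => //.
    by apply: pauli_scale => //; apply: pauli_mul; apply: pauli_kron; [apply/pauliE; exists 1, Q; split => //; [exact: isph1|by rewrite scale1r]|exact: pauli_one].
  right; rewrite -!scalemxAl !kronX ?kron2E ctrlE !blk_mul !mxE /=; ms.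
  by rewrite e2.
- exists (w *: (kron2 (pauli1 C (@Ordinal 4 2 isT)) Q *m kron2 (pauli1 C x1) 1%:M)), Q; split => //.
    by apply: pauli_scale => //; apply: pauli_mul; apply: pauli_kron; [apply/pauliE; exists 1, Q; split => //; [exact: isph1|by rewrite scale1r]|exact: pauli_one].
  right; rewrite -!scalemxAl !kronX ?kron2E ctrlE !blk_mul !mxE /=; ms.
  by rewrite -!scalemxAl e2.
- exists (w *: kron2 (pauli1 C (@Ordinal 4 3 isT)) Q), Q; split => //; left.
  rewrite -scalemxAl kron2E ctrlE blk_mul !mxE /=; ms.
  by rewrite mulNmx e1.
Qed.

End S.


Section S.
Variable C : numClosedFieldType.

Lemma p1_conj a b : exists c, isph c /\
  pauli1 C a *m pauli1 C b *m adjoint (pauli1 C a) = c *: pauli1 C b.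
Proof.
have [c [d [hc e]]] := p1_mul C a b.
exists (c * c); split; first exact: isph_mul.
rewrite p1_adj -[_ *m pauli1 C a]mulmx1 -(p1_sq C b) !mulmxA.
rewrite -[_ *m pauli1 C a *m pauli1 C b]mulmxA e scale_mul p1_sq.
by rewrite -scalemxAl mul1mx.
Qed.

Lemma string_pauli n (S : 'M[C]_(2^n)) : string S -> is_pauli S.
Proof. by move=> hS; apply/pauliE; exists 1, S; split => //; [exact: isph1|rewrite scale1r]. Qed.

Lemma kron_cliff n a (B : 'M[C]_(2^n)) : hier 1 B -> hier 1 (kron2 (pauli1 C a) B).
Proof.
move=> hB; have [b1 b2] := hier_unitary hB; split.
  by split; rewrite kron2_adj kron2_mul ?b1 ?b2 p1_adj p1_sq kron2_one.
move=> P /pauli_dec [w [b [S [hw hS ->]]]] /=.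
have [c [hc e]] := p1_conj a b.
rewrite -scalemxAr -scalemxAl kron2_adj !kron2_mul e kron2_scalel scalerA.
apply: pauli_scale; first exact: isph_mul.
apply: pauli_kron; apply: cliff_conj => //; exact: string_pauli.
Qed.

Lemma ctrl_sg n s : issg s -> is_pauli (ctrl (s *: (1%:M : 'M[C]_(2^n)))).
Proof.
case=> ->; first by rewrite scale1r ctrl_one; apply: pauli_one.
rewrite scaleN1r -kronZ1; apply: pauli_kron; exact: pauli_one.
Qed.

Lemma issg_mul (s t : C) : issg s -> issg t -> issg (s * t).
Proof. by case=> -> [] ->; rewrite /issg ?mul1r ?mulN1r ?opprK; tauto. Qed.

Lemma QVQV n (Q V : 'M[C]_(2^n)) : string Q -> is_pauli V ->
  exists s, issg s /\ Q *m V *m Q *m adjoint V = s *: 1%:M.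
Proof.
move=> hQ hV; have [s [hs e]] := pauli_comm (string_pauli hQ) hV.
have [v1 v2] := pauli_unitary hV.
exists s; split => //; move: e; rewrite str_adj // => ->.
by rewrite -scalemxAl v1.
Qed.

Lemma upper0 n (V : 'M[C]_(2^n)) : hier 1 V -> is_pauli V -> hier 1 (ctrl V).
Proof.
move=> hV hP; have hu := hier_unitary hV.
split; first exact: ctrl_unitary.
move=> P hP'; have [P1 [Q [h1 hQ [->|->]]]] := conj_dec hu hP'.
  have [s [hs ->]] := QVQV hQ hP.
  by apply: pauli_mul => //; apply: ctrl_sg.
have [s [hs ->]] := QVQV hQ hP.
have [t [ht ->]] := pauli_sq hP.
rewrite -scalemxAl mul1mx scalerA.
apply: pauli_mul; first (apply: pauli_mul => //; apply: ctrl_sg; exact: issg_mul).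
by apply: pauli_kron; apply: pauli_adj.
Qed.

Lemma upper k : forall n (V : 'M[C]_(2^n)), hier 1 V -> is_pauli (mxpow V (2^k)) ->
  hier k.+1 (ctrl V).
Proof.
elim: k => [|k IH] n V hV hP.
  by rewrite expn0 mxpow1 in hP; apply: upper0.
have hu := hier_unitary hV.
split; first exact: ctrl_unitary.
move=> P hP'; have [P1 [Q [h1 hQ [->|->]]]] := conj_dec hu hP'.
  apply: hier_mull => //.
  have hW : is_pauli (Q *m V *m Q *m adjoint V).
    rewrite -!mulmxA; apply: pauli_mul; first exact: string_pauli.
    rewrite !mulmxA; apply: cliff_conj => //; exact: string_pauli.
  apply: (@hier_le _ 1) => //.
  by apply: upper0 => //; exact: pauli_cliff.
have hW : is_pauli (Q *m V *m Q *m adjoint V).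
  rewrite -!mulmxA; apply: pauli_mul; first exact: string_pauli.
  rewrite !mulmxA; apply: cliff_conj => //; exact: string_pauli.
have hM : hier 1 (Q *m V *m Q *m adjoint V *m (V *m V)).
  apply: hier_mulr; first exact: pauli_cliff.
  exact: hier_mulr.
have [R [hR eR]] := pow_WV2 k hW hV.
have hMp : is_pauli (mxpow (Q *m V *m Q *m adjoint V *m (V *m V)) (2 ^ k)).
  by rewrite eR; apply: pauli_mul.
have hVa : hier 1 (adjoint V).
  have e : (2 ^ k.+1 = (2 ^ k.+1).-1.+1)%N by rewrite prednK // expn_gt0.
  by apply: (@cliff_inv _ _ _ _ (2 ^ k.+1).-1 hV _ hP); rewrite -e.
apply: hier_mulr; last exact: kron_cliff.
by apply: hier_mull => //; apply: IH.
Qed.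
End S.


Section S.
Variable C : numClosedFieldType.
Ltac ms := rewrite ?(mul0mx, mulmx0, mul1mx, mulmx1, add0r, addr0, scale0r, scale1r, adj_one, adj_zero, scaleN1r).

Lemma conjX n (V : 'M[C]_(2^n)) :
  ctrl V *m kron2 (pauli1 C x1) 1%:M *m adjoint (ctrl V) = blk 0 (adjoint V) V 0.
Proof. by rewrite conj_ctrl !mxE /=; ms. Qed.

Lemma one_neq0 n : (1%:M : 'M[C]_(2^n)) != 0.
Proof.
apply/eqP => /matrixP /(_ (Ordinal (expn_gt0 2 n)) (Ordinal (expn_gt0 2 n))).
by rewrite !mxE eqxx /= => /eqP; rewrite oner_eq0.
Qed.

Lemma lower0 n (V : 'M[C]_(2^n)) : hier 1 V -> hier 1 (ctrl V) -> is_pauli V.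
Proof.
move=> hV [_ h].
have := h _ (pauli_kron x1 (pauli_one C n)); rewrite /= conjX.
case/pauli_dec => w [b [S [hw hS e]]].
move: e; rewrite -kron2_scaler kron2E => /blk_inj [_ _ eV _].
have [v1 _] := hier_unitary hV.
have hS' : is_pauli (w *: S) by apply: pauli_scale => //; exact: string_pauli.
move: eV; case: b => [[|[|[|[|//]]]] ?]; rewrite !mxE /=; ms; rewrite ?scaler0 ?scale0r => eq.
- by move: v1; rewrite eq mul0mx => /esym/eqP; rewrite (negbTE (one_neq0 n)).
- by rewrite eq.
- by rewrite eq; apply: pauli_scale => //; rewrite /isph; tauto.
- by move: v1; rewrite eq mul0mx => /esym/eqP; rewrite (negbTE (one_neq0 n)).
Qed.

Lemma lower k : forall n (V : 'M[C]_(2^n)), hier 1 V -> hier k.+1 (ctrl V) ->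
  is_pauli (mxpow V (2^k)).
Proof.
elim: k => [|k IH] n V hV hC.
  by rewrite expn0 mxpow1; apply: lower0.
rewrite -mxpow_sq2; apply: IH; first exact: hier_mulr.
have [v1 v2] := hier_unitary hV.
have -> : ctrl (V *m V) =
   (ctrl V *m kron2 (pauli1 C x1) 1%:M *m adjoint (ctrl V)) *m kron2 (pauli1 C x1) V.
  by rewrite conjX kronX ctrlE blk_mul; ms; rewrite v2.
apply: hier_mulr; last exact: kron_cliff.
case: hC => _ h; apply: h; apply: pauli_kron; exact: pauli_one.
Qed.
End S.


Lemma inv_eq (C : numClosedFieldType) k (A B : 'M[C]_k) : A *m B = 1%:M -> invmx A = B.
Proof.
move=> e; have [hA _] := mulmx1_unit e.
by rewrite -[invmx A]mulmx1 -e mulmxA mulVmx // mul1mx.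
Qed.

Lemma pauli_adjE (C : numClosedFieldType) n (M : 'M[C]_(2^n)) : is_pauli (adjoint M) <-> is_pauli M.
Proof. by split => h; [rewrite -[M]adjK|]; apply: pauli_adj. Qed.

Theorem mainTheorem3 (C : numClosedFieldType) (n : nat) (U : 'M[C]_(2 ^ n)) (m : nat) :
  (1 <= n)%N -> (1 <= m)%N ->
  clifford_level 2 U -> pauli_periodicity U m ->
  [/\ invmx (ctrl U) = ctrl (invmx U),
      clifford_level 2 (invmx U),
      pauli_periodicity (invmx U) m,
      clifford_level (m + 2) (invmx (ctrl U))
    & ~ clifford_level (m + 1) (invmx (ctrl U))].
Proof.
move=> hn hm hU [hP hnot]; change (hier 1 U) in hU.
have [u1 u2] := hier_unitary hU.
have iU : invmx U = adjoint U by apply: inv_eq.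
have icU : invmx (ctrl U) = ctrl (adjoint U).
  by apply: inv_eq; rewrite ctrl_mul u1 ctrl_one.
have hUa : hier 1 (adjoint U).
  have e : (2 ^ m = (2 ^ m).-1.+1)%N by rewrite prednK // expn_gt0.
  by apply: (@cliff_inv _ _ _ _ (2 ^ m).-1 hU _ hP); rewrite -e.
have hPa : is_pauli (mxpow (adjoint U) (2 ^ m)) by rewrite -mxpow_adj; apply/pauli_adjE.
have hnota : forall t, (t < m)%N -> ~ is_pauli (mxpow (adjoint U) (2 ^ t)).
  by move=> t ht; rewrite -mxpow_adj => /pauli_adjE; apply: hnot.
rewrite icU iU; split => //.
- by rewrite addn2 /=; apply: upper.
case: m hm hP hnot hPa hnota => [|k] // _ _ _ _ hnota.
rewrite addn1 /= => hC.
by apply: (hnota k) => //; apply: lower.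
Qed.
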